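(* Let $k\ge 3$ be an integer, let $\mathcal H$ be a Hilbert space over $\mathbb K\in\{\mathbb R,\mathbb C\}$, and let $\mathbf{x}_1,\ldots,\mathbf{x}_k\in\mathcal H$ be norm one vectors. There exists a (nonzero) continuous symmetric $k$-linear form $T:\mathcal H\times\cdots\times\mathcal H\to\mathbb K$ attaining its norm at $(\mathbf{x}_1,\ldots,\mathbf{x}_k)$ if and only if $$\dim\big(\operatorname{span}\{\mathbf{x}_1,\ldots,\mathbf{x}_k\}\big)=\begin{cases}1 & \text{if } \mathbb K=\mathbb C,\\ 1 \text{ or } 2 & \text{if } \mathbb K=\mathbb R.\end{cases}$$
   Context: For a continuous $k$-linear form $T$ on $\mathcal H$, $\|T\|=\sup\{|T(\mathbf{w}_1,\ldots,\mathbf{w}_k)|:\|\mathbf{w}_1\|,\ldots,\|\mathbf{w}_k\|\le 1\}$. A nonzero $T$ attains its norm at $(\mathbf{x}_1,\ldots,\mathbf{x}_k)$, where the $\mathbf{x}_i$ are norm one vectors, if $\|T\|=|T(\mathbf{x}_1,\ldots,\mathbf{x}_k)|$. In the complex case, multilinear forms are $\mathbb C$-multilinear. *)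

(* Defs.v *)
From HB Require Import structures.
From mathcomp Require Import all_boot all_order all_algebra all_fingroup.
From mathcomp Require Import reals complex.
Set Implicit Arguments. Unset Strict Implicit. Unset Printing Implicit Defensive.
Import Order.TTheory GRing.Theory Num.Theory.
Local Open Scope ring_scope.

Section Defs.
Variables (K : numFieldType) (cj : K -> K) (V : lmodType K).

(* ip is an inner product (linear in the first argument, cj-symmetric,
   positive definite), where cj is the conjugation of K (id when K = R). *)
Definition is_inner_product (ip : V -> V -> K) : Prop :=
  [/\ forall (a : K) (x y z : V), ip (a *: x + y) z = a * ip x z + ip y z,
      forall x y : V, ip x y = cj (ip y x),
      forall x : V, 0 <= ip x x
    & forall x : V, ip x x = 0 -> x = 0].

(* completeness for the induced norm ||x|| = sqrt (ip x x):
   ||d|| < e  is expressed as  ip d d < e ^+ 2  for e > 0. *)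
Definition ip_complete (ip : V -> V -> K) : Prop :=
  forall u : nat -> V,
    (forall e : K, 0 < e -> exists N : nat, forall m n : nat, (N <= m)%N -> (N <= n)%N ->
        ip (u m - u n) (u m - u n) < e ^+ 2) ->
    exists l : V, forall e : K, 0 < e -> exists N : nat, forall n : nat, (N <= n)%N ->
        ip (u n - l) (u n - l) < e ^+ 2.

Definition is_hilbert (ip : V -> V -> K) : Prop :=
  is_inner_product ip /\ ip_complete ip.

Variable k : nat.

Definition upd (w : 'I_k -> V) (i : 'I_k) (v : V) : 'I_k -> V :=
  fun j => if j == i then v else w j.

Definition multilinear (T : ('I_k -> V) -> K) : Prop :=
  forall (w : 'I_k -> V) (i : 'I_k) (a : K) (u v : V),
    T (upd w i (a *: u + v)) = a * T (upd w i u) + T (upd w i v).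

Definition symmetric_form (T : ('I_k -> V) -> K) : Prop :=
  forall (s : 'S_k) (w : 'I_k -> V), T (fun j => w (s j)) = T w.

Definition in_unit_ball (ip : V -> V -> K) (v : V) : Prop := ip v v <= 1.

(* continuity of a multilinear form: bounded on the product of unit balls
   (i.e. ||T|| < oo) *)
Definition continuous_form (ip : V -> V -> K) (T : ('I_k -> V) -> K) : Prop :=
  exists C : K, forall w : 'I_k -> V,
    (forall i, in_unit_ball ip (w i)) -> `|T w| <= C.

Definition attains_norm_at (ip : V -> V -> K) (T : ('I_k -> V) -> K)
    (x : 'I_k -> V) : Prop :=
  (exists w : 'I_k -> V, T w != 0) /\
  forall w : 'I_k -> V, (forall i, in_unit_ball ip (w i)) -> `|T w| <= `|T x|.

(* dim span {x_1, ..., x_k} = d : there is a linearly independent family of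
   d vectors with the same span as the x_i. *)
Definition in_span (m : nat) (y : 'I_m -> V) (v : V) : Prop :=
  exists c : 'I_m -> K, v = \sum_(j < m) c j *: y j.

Definition lin_indep (m : nat) (y : 'I_m -> V) : Prop :=
  forall c : 'I_m -> K, \sum_(j < m) c j *: y j = 0 -> forall j, c j = 0.

Definition span_dim (x : 'I_k -> V) (d : nat) : Prop :=
  exists y : 'I_d -> V,
    [/\ lin_indep y, forall j, in_span x (y j) & forall i, in_span y (x i)].

Definition norm_attainment_char (D : nat -> Prop) : Prop :=
  forall (ip : V -> V -> K), is_hilbert ip ->
  forall x : 'I_k -> V, (forall i, ip (x i) (x i) = 1) ->
    ((exists T : ('I_k -> V) -> K,
        [/\ multilinear T, symmetric_form T, continuous_form ip T
          & attains_norm_at ip T x])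
     <-> exists d, D d /\ span_dim x d).
End Defs.

(* Main.v *)
Require Import Defs.
From HB Require Import structures.
From mathcomp Require Import all_boot all_order all_algebra all_fingroup.
From mathcomp Require Import reals complex.
From mathcomp Require Import ring lra zify.
From Stdlib Require Import FunctionalExtensionality Classical.
Import Order.TTheory GRing.Theory Num.Theory.
Local Open Scope ring_scope.
Definition cj_ok {K : numFieldType} (cj : K -> K) :=
  [/\ forall x y, cj (x + y) = cj x + cj y,
      forall x y, cj (x * y) = cj x * cj y,
      forall x, cj (cj x) = x,
      forall x, x * cj x = `|x| ^+ 2
    & (forall x : K, 0 <= x -> cj x = x) /\
      (forall r : K, 0 <= r -> exists s : K, 0 <= s /\ s ^+ 2 = r)].

Section Generic.
Variables (K : numFieldType) (cj : K -> K) (V : lmodType K).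
Hypothesis hcj : cj_ok (K:=K) cj.
Let cjD : forall x y, cj (x + y) = cj x + cj y. Proof. by case: hcj. Qed.
Let cjM : forall x y, cj (x * y) = cj x * cj y. Proof. by case: hcj. Qed.
Let cjK : forall x, cj (cj x) = x. Proof. by case: hcj. Qed.
Let cjN : forall x, x * cj x = `|x| ^+ 2. Proof. by case: hcj. Qed.
Let cjR : forall x : K, 0 <= x -> cj x = x. Proof. by case: hcj => _ _ _ _ []. Qed.
Let sqrtK : forall r : K, 0 <= r -> exists s : K, 0 <= s /\ s ^+ 2 = r.
Proof. by case: hcj => _ _ _ _ []. Qed.
Variable ip : V -> V -> K.
Hypothesis hip : is_inner_product cj ip.

Lemma cj0 : cj 0 = 0.
Proof.
have h : cj 0 + 0 = cj 0 + cj 0 by rewrite addr0 -cjD addr0.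
by rewrite -(addrI _ h).
Qed.
Lemma cjNeg x : cj (- x) = - cj x.
Proof. by apply/eqP; rewrite -subr_eq0 opprK -cjD addNr cj0. Qed.
Lemma cj1 : cj 1 = 1. Proof. by apply: cjR. Qed.

Lemma ipDZ a x y z : ip (a *: x + y) z = a * ip x z + ip y z.
Proof. by case: hip. Qed.
Lemma ipC x y : ip x y = cj (ip y x).
Proof. by case: hip. Qed.
Lemma ip_ge0 x : 0 <= ip x x. Proof. by case: hip. Qed.
Lemma ip_eq0 x : ip x x = 0 -> x = 0. Proof. by case: hip => _ _ _; apply. Qed.

Lemma ipDl x y z : ip (x + y) z = ip x z + ip y z.
Proof. by have := ipDZ 1 x y z; rewrite scale1r mul1r. Qed.
Lemma ip0l z : ip 0 z = 0.
Proof.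
have h : ip 0 z + 0 = ip 0 z + ip 0 z by rewrite addr0 -ipDl addr0.
by rewrite -(addrI _ h).
Qed.
Lemma ipZl a x z : ip (a *: x) z = a * ip x z.
Proof. by rewrite -[a *: x]addr0 ipDZ ip0l addr0. Qed.
Lemma ipNl x z : ip (- x) z = - ip x z.
Proof. by rewrite -scaleN1r ipZl mulN1r. Qed.
Lemma ipBl x y z : ip (x - y) z = ip x z - ip y z.
Proof. by rewrite ipDl ipNl. Qed.
Lemma ipDr x y z : ip x (y + z) = ip x y + ip x z.
Proof. by rewrite ipC ipDl cjD -!ipC. Qed.
Lemma ipZr a x y : ip x (a *: y) = cj a * ip x y.
Proof. by rewrite ipC ipZl cjM -ipC. Qed.
Lemma ip0r x : ip x 0 = 0.
Proof. by rewrite ipC ip0l cj0. Qed.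
Lemma ipNr x z : ip x (- z) = - ip x z.
Proof. by rewrite ipC ipNl cjNeg -ipC. Qed.
Lemma ipBr x y z : ip x (y - z) = ip x y - ip x z.
Proof. by rewrite ipDr ipNr. Qed.

Lemma cj_norm x : `|cj x| = `|x|.
Proof.
apply/eqP; rewrite -(@eqrXn2 _ 2) ?normr_ge0 //.
by rewrite -cjN cjK mulrC cjN.
Qed.

Lemma hom_bound (g : V -> K) (C : K) :
  (forall (s : K) u, g (s *: u) = s * g u) ->
  (forall u, ip u u <= 1 -> `|g u| ^+ 2 <= C) ->
  forall u, `|g u| ^+ 2 <= C * ip u u.
Proof.
move=> gZ hb u.
have [N0|Nn0] := eqVneq (ip u u) 0.
  rewrite N0 mulr0 (ip_eq0 _ N0) -[0 : V](scale0r 0) gZ mul0r normr0 expr0n.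
  by [].
have Npos : 0 < ip u u by rewrite lt_def Nn0 ip_ge0.
have [s [s0 sE]] := sqrtK _ (ip_ge0 u).
have sn0 : s != 0 by apply: contra Nn0 => /eqP s0'; rewrite -sE s0' expr0n.
have si0 : 0 <= s^-1 by rewrite invr_ge0.
have : ip (s^-1 *: u) (s^-1 *: u) <= 1.
  rewrite ipZl ipZr (cjR _ si0) -sE mulrA -expr2 -exprMn mulVf // expr1n.
  by rewrite lexx.
move=> /hb; rewrite gZ normrM exprMn (ger0_norm si0) => h.
have -> : `|g u| ^+ 2 = s ^+ 2 * (s^-1 ^+ 2 * `|g u| ^+ 2).
  by rewrite mulrA -exprMn mulfV // expr1n mul1r.
by rewrite sE mulrC ler_wpM2r // ip_ge0.
Qed.


Lemma sq_le0_eq0 (y : K) : `|y| ^+ 2 <= 0 -> y = 0.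
Proof.
move=> h; have : `|y| ^+ 2 = 0 by apply/le_anti; rewrite h exprn_ge0.
by move/eqP; rewrite expf_eq0 /= normr_eq0 => /eqP.
Qed.

Lemma riesz1 (f : V -> K) (M : K) (c : V) :
  (forall a u v, f (a *: u + v) = a * f u + f v) ->
  0 <= M ->
  (forall u, `|f u| ^+ 2 <= M ^+ 2 * ip u u) ->
  ip c c = 1 -> `|f c| = M ->
  forall u, f u = f c * ip u c.
Proof.
move=> fl M0 fb Nc fcM u.
have fD x y : f (x + y) = f x + f y by have := fl 1 x y; rewrite scale1r mul1r.
have f0 : f 0 = 0.
  have h : f 0 + 0 = f 0 + f 0 by rewrite addr0 -fD addr0.
  by rewrite -(addrI _ h).
have fZ a x : f (a *: x) = a * f x by rewrite -[a *: x]addr0 fl f0 addr0.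
pose v := u - ip u c *: c.
have vc : ip v c = 0 by rewrite /v ipBl ipZl Nc mulr1 subrr.
have cv : ip c v = 0 by rewrite ipC vc cj0.
suff fv : f v = 0.
  rewrite {1}(_ : u = v + ip u c *: c); last by rewrite /v subrK.
  by rewrite fD fZ fv add0r mulrC.
apply: sq_le0_eq0.
have X0 : 0 <= `|f v| ^+ 2 := exprn_ge0 _ (normr_ge0 _).
have [M0'|Mpos] := eqVneq M 0.
  by have := fb v; rewrite M0' expr0n /= mul0r.
have Mp : 0 < M by rewrite lt_def Mpos M0.
set X := `|f v| ^+ 2.
set Y := M ^+ 2 * ip v v.
have Y0 : 0 <= Y by rewrite mulr_ge0 ?exprn_ge0 ?ip_ge0.
pose e := (Y + 1)^-1.
have Y1 : 0 < Y + 1 by rewrite ltr_wpDl ?ltr01.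
have e0 : 0 < e by rewrite invr_gt0.
have eY : e * Y <= 1 by rewrite mulrC ler_pdivrMr // mul1r lerDl ler01.
pose t := e * f c * cj (f v).
have key := fb (c + t *: v).
rewrite fD fZ in key.
have E1 : f c + t * f v = f c * (1 + e * X).
  by rewrite /t /X -cjN; ring.
have tt : t * cj t = e ^+ 2 * M ^+ 2 * X.
  by rewrite /t !cjM cjK (cjR _ (ltW e0)) /X -fcM -!cjN; ring.
have E2 : ip (c + t *: v) (c + t *: v) = 1 + e ^+ 2 * X * Y.
  rewrite ipDl !ipDr !ipZl !ipZr Nc cv vc !mulr0 !addr0 mulrA tt /Y; ring.
rewrite E1 E2 normrM exprMn fcM (ger0_norm (_ : 0 <= 1 + e * X)) in key; last first.
  by rewrite addr_ge0 ?ler01 // mulr_ge0 // ltW.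
rewrite ler_pM2l ?exprn_gt0 // in key.
have k2 : 2 * e * X + (e * X) ^+ 2 <= e ^+ 2 * X * Y.
  by rewrite -(lerD2l 1); apply: le_trans key; rewrite le_eqVlt; apply/orP; left; apply/eqP; ring.
have eX0 : 0 <= e * X by rewrite mulr_ge0 // ltW.
have k3 : 2 * e * X <= e * X.
  apply: le_trans (_ : e ^+ 2 * X * Y <= _).
    by apply: le_trans k2; rewrite lerDl exprn_ge0.
  have -> : e ^+ 2 * X * Y = (e * X) * (e * Y) by ring.
  by rewrite ler_piMr.
have : e * X <= 0.
  have -> : e * X = 2 * e * X - e * X by ring.
  by rewrite subr_le0.
by rewrite pmulr_rle0.
Qed.


Definition trilin (B : V -> V -> V -> K) :=
  [/\ forall a u u' v w, B (a *: u + u') v w = a * B u v w + B u' v w,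
      forall u v w, B u v w = B v u w,
      forall u v w, B u v w = B u w v
    & forall u v w, `|B u v w| ^+ 2 <= ip u u * ip v v * ip w w].

Definition norming (B : V -> V -> V -> K) a b c :=
  [/\ ip a a = 1, ip b b = 1, ip c c = 1 & B a b c = 1].

Section TriLin.
Variable B : V -> V -> V -> K.
Hypothesis hB : trilin B.

Lemma Bl a u u' v w : B (a *: u + u') v w = a * B u v w + B u' v w.
Proof. by case: hB. Qed.
Lemma B12 u v w : B u v w = B v u w. Proof. by case: hB. Qed.
Lemma B23 u v w : B u v w = B u w v. Proof. by case: hB. Qed.
Lemma Bbd u v w : `|B u v w| ^+ 2 <= ip u u * ip v v * ip w w.
Proof. by case: hB. Qed.
Lemma B13 u v w : B u v w = B w v u.
Proof. by rewrite B23 B12 B23. Qed.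
Lemma BD1 u u' v w : B (u + u') v w = B u v w + B u' v w.
Proof. by have := Bl 1 u u' v w; rewrite scale1r mul1r. Qed.
Lemma B01 v w : B 0 v w = 0.
Proof.
have h : B 0 v w + 0 = B 0 v w + B 0 v w by rewrite addr0 -BD1 addr0.
by rewrite -(addrI _ h).
Qed.
Lemma BZ1 a u v w : B (a *: u) v w = a * B u v w.
Proof. by rewrite -[a *: u]addr0 Bl B01 addr0. Qed.
Lemma BD2 u v v' w : B u (v + v') w = B u v w + B u v' w.
Proof. by rewrite B12 BD1 -!(B12 u). Qed.
Lemma BZ2 a u v w : B u (a *: v) w = a * B u v w.
Proof. by rewrite B12 BZ1 -B12. Qed.
Lemma BD3 u v w w' : B u v (w + w') = B u v w + B u v w'.
Proof. by rewrite B13 BD1 -!(B13 _ _ u). Qed.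
Lemma BZ3 a u v w : B u v (a *: w) = a * B u v w.
Proof. by rewrite B13 BZ1 -B13. Qed.
Lemma Bl3 a u v w w' : B u v (a *: w + w') = a * B u v w + B u v w'.
Proof. by rewrite BD3 BZ3. Qed.

Lemma norm12 {a b c} : norming B a b c -> norming B b a c.
Proof. by case=> *; split=> //; rewrite B12. Qed.
Lemma norm23 {a b c} : norming B a b c -> norming B a c b.
Proof. by case=> *; split=> //; rewrite B23. Qed.

Lemma F1c {a b c} : norming B a b c -> forall u, B a b u = ip u c.
Proof.
case=> Na Nb Nc Babc u.
have fb w : `|B a b w| ^+ 2 <= 1 ^+ 2 * ip w w.
  by have := Bbd a b w; rewrite Na Nb !mul1r expr1n mul1r.
have := @riesz1 (B a b) 1 c (fun s u v => Bl3 s a b u v) ler01 fb Nc.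
by rewrite Babc normr1 => /(_ erefl u); rewrite mul1r.
Qed.
Lemma F1a {a b c} : norming B a b c -> forall u, B u b c = ip u a.
Proof.
move=> h u; rewrite B13 B12; apply: F1c.
by move: h => /norm12 /norm23.
Qed.
Lemma F1b {a b c} : norming B a b c -> forall u, B a u c = ip u b.
Proof. by move=> h u; rewrite B23; apply: F1c; apply: norm23. Qed.

Lemma Bzzc {a b c} t : norming B a b c ->
  B (a + t *: b) (a + t *: b) c = ip a b + 2 * t + t ^+ 2 * ip b a.
Proof.
move=> h; have [_ _ _ Babc] := h.
rewrite !BD1 !BD2 !BZ1 !BZ2 Babc (B12 b a) Babc (F1b h) (F1a h); ring.
Qed.

Lemma F2gen {a b c} t : norming B a b c ->
  `|B (a + t *: b) (a + t *: b) c| = ip (a + t *: b) (a + t *: b) ->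
  forall w, B (a + t *: b) (a + t *: b) w
      = B (a + t *: b) (a + t *: b) c * ip w c.
Proof.
move=> h hn; have [_ _ Nc _] := h.
apply: (@riesz1 _ (ip (a + t *: b) (a + t *: b))) => //.
- by move=> *; apply: Bl3.
- exact: ip_ge0.
- by move=> u; rewrite expr2; exact: Bbd.
Qed.

Lemma F2sum {a b c} : norming B a b c ->
  forall w, B a a w + B b b w = (ip a b + ip b a) * ip w c.
Proof.
move=> h w; have [Na Nb _ Babc] := h.
have E : B (a + 1 *: b) (a + 1 *: b) c = ip (a + 1 *: b) (a + 1 *: b).
  rewrite Bzzc // ipDl !ipDr !ipZl !ipZr cj1 Na Nb; ring.
have := F2gen 1 h; rewrite E ger0_norm ?ip_ge0 // => /(_ erefl w).
rewrite scale1r !BD1 !BD2 (F1c h) (B12 b a) (F1c h) ipDl !ipDr Na Nb.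
move=> e.
have -> : B a a w + B b b w = (B a a w + ip w c + (ip w c + B b b w)) - (ip w c + ip w c) by ring.
rewrite e; ring.
Qed.

Lemma F2diff {j : K} : j ^+ 2 = -1 -> cj j = - j ->
  forall {a b c}, norming B a b c ->
  forall w, B a a w - B b b w = (ip a b - ip b a) * ip w c.
Proof.
move=> j2 cjj a b c h w; have [Na Nb _ Babc] := h.
have E : B (a + j *: b) (a + j *: b) c = j * ip (a + j *: b) (a + j *: b).
  rewrite Bzzc // ipDl !ipDr !ipZl !ipZr cjj Na Nb; ring: j2.
have nj : `|j| = 1.
  apply/eqP; rewrite -sqrp_eq1 ?normr_ge0 // -cjN cjj.
  by apply/eqP; rewrite mulrN -expr2 j2 opprK.
have := F2gen j h; rewrite E normrM nj mul1r ger0_norm ?ip_ge0 // => /(_ erefl w).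
rewrite !BD1 !BD2 !BZ1 !BZ2 (F1c h) (B12 b a) (F1c h) ipDl !ipDr !ipZl !ipZr cjj Na Nb.
move=> e.
have -> : B a a w - B b b w = (B a a w + j * ip w c + (j * ip w c + j * (j * B b b w)))
   - 2 * j * ip w c by ring: j2.
rewrite e; ring: j2.
Qed.

Lemma CF {j : K} : j ^+ 2 = -1 -> cj j = - j ->
  forall {a b c}, norming B a b c ->
  forall w, B a a w = ip a b * ip w c.
Proof.
move=> j2 cjj a b c h w.
have h1 := F2sum h w; have h2 := F2diff j2 cjj h w.
apply: (@mulfI _ 2); first by rewrite pnatr_eq0.
have -> : 2 * B a a w = (B a a w + B b b w) + (B a a w - B b b w) by ring.
rewrite h1 h2; ring.
Qed.

Lemma complex_core (j : K) : j ^+ 2 = -1 -> cj j = - j ->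
  forall a b c, norming B a b c -> a = ip a c *: c.
Proof.
move=> j2 cjj a b c h; have [Na Nb Nc Babc] := h.
have hbac := norm12 h. have hacb := norm23 h. have hbca := norm23 hbac.
have hcab := norm23 (norm12 hbca).
have E1 w : ip b a * ip w c = ip b c * ip w a.
  by rewrite -(CF j2 cjj hbac) (CF j2 cjj hbca).
have E2 w : ip a b * ip w c = ip a c * ip w b.
  by rewrite -(CF j2 cjj h) (CF j2 cjj hacb).
have [D0|Dn0] := eqVneq (1 - ip a c * cj (ip a c)) 0.
  apply/eqP; rewrite -subr_eq0; apply/eqP; apply: ip_eq0.
  rewrite ipBl !ipBr !ipZl !ipZr Na Nc (ipC c a) -[RHS]D0; ring.
exfalso.
have e1 := E1 a; have e2 := E1 c; rewrite Na in e1; rewrite Nc in e2.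
have ba : ip b a = 0.
  apply/eqP; move: Dn0; apply: contraR => nz.
  apply/eqP; apply: (mulfI nz); rewrite mulr0 mulrBr mulr1 mulrA e1 mulr1 -ipC.
  by rewrite -e2 mulr1 subrr.
have bc : ip b c = 0 by move: e1; rewrite ba mul0r mulr1 => <-.
have ab : ip a b = 0 by rewrite ipC ba cj0.
have cb : ip c b = 0 by rewrite ipC bc cj0.
have ac : ip a c = 0 by have := E2 b; rewrite ab Nb mul0r mulr1 => <-.
have ca : ip c a = 0 by rewrite ipC ac cj0.
have Baa w : B a a w = 0 by rewrite (CF j2 cjj h) ab mul0r.
have Bbb w : B b b w = 0 by rewrite (CF j2 cjj hbac) ba mul0r.
have Bcc w : B c c w = 0 by rewrite (CF j2 cjj hcab) ca mul0r.
have Baa2 w : B a w a = 0 by rewrite B23 Baa.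
have Baa3 w : B w a a = 0 by rewrite B13 Baa.
have Bbb2 w : B b w b = 0 by rewrite B23 Bbb.
have Bbb3 w : B w b b = 0 by rewrite B13 Bbb.
have Bcc2 w : B c w c = 0 by rewrite B23 Bcc.
have Bcc3 w : B w c c = 0 by rewrite B13 Bcc.
have P1 : B a c b = 1 by rewrite (B23 a c b).
have P2 : B b a c = 1 by rewrite (B12 b a c).
have P3 : B b c a = 1 by rewrite (B13 b c a) (B23 a c b).
have P4 : B c a b = 1 by rewrite (B12 c a b) (B23 a c b).
have P5 : B c b a = 1 by rewrite (B13 c b a).
pose s := a + b + c.
have Ns : ip s s = 3.
  rewrite /s !ipDl !ipDr Na Nb Nc ab ba ac ca bc cb; ring.
have Bs : B s s s = 6.
  rewrite /s !BD1 !BD2 !BD3 !Baa !Bbb !Bcc !Baa2 !Bbb2 !Bcc2 !Baa3 !Bbb3 !Bcc3.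
  rewrite Babc P1 P2 P3 P4 P5; ring.
have := Bbd s s s; rewrite Bs Ns normr_nat -natrX -!natrM ler_nat.
by [].
Qed.

End TriLin.

Lemma trilin_opp B : trilin B -> trilin (fun u v w => - B u v w).
Proof.
case=> h1 h2 h3 h4; split.
- by move=> a u u' v w; rewrite h1 opprD mulrN.
- by move=> u v w; rewrite h2.
- by move=> u v w; rewrite h3.
- by move=> u v w; rewrite normrN.
Qed.

Lemma real_core (cjid : forall x, cj x = x) B (hB : trilin B) a b c :
  norming B a b c -> ip (a + b) (a + b) != 0 -> ip (a - b) (a - b) != 0 ->
  exists al be, c = al *: a + be *: b.
Proof.
move=> h Pn0 Mn0; have [Na Nb Nc Babc] := h.
have Bp : B (a + b) (a + b) c = ip (a + b) (a + b).
  rewrite !(BD1 _ hB) !(BD2 _ hB) Babc (B12 _ hB b a) Babc (F1b _ hB h) (F1a _ hB h).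
  rewrite ipDl !ipDr Na Nb; ring.
have Bm : B (a - b) (a - b) c = - ip (a - b) (a - b).
  rewrite -scaleN1r !(BD1 _ hB) !(BD2 _ hB) !(BZ1 _ hB) !(BZ2 _ hB) Babc (B12 _ hB b a) Babc.
  rewrite (F1b _ hB h) (F1a _ hB h) ipDl !ipDr !ipZl !ipZr cjid Na Nb; ring.
have [s1 [s10 s1E]] := sqrtK _ (ip_ge0 (a + b)).
have s1n0 : s1 != 0 by apply: contra Pn0 => /eqP e; rewrite -s1E e expr0n.
have [s2 [s20 s2E]] := sqrtK _ (ip_ge0 (a - b)).
have s2n0 : s2 != 0 by apply: contra Mn0 => /eqP e; rewrite -s2E e expr0n.
pose p := s1^-1 *: (a + b).
pose m := s2^-1 *: (a - b).
have Np : ip p p = 1 by rewrite /p ipZl ipZr cjid -s1E; field.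
have Nm : ip m m = 1 by rewrite /m ipZl ipZr cjid -s2E; field.
have hp : norming B p p c.
  by split=> //; rewrite /p (BZ1 _ hB) (BZ2 _ hB) Bp -s1E; field.
have hB' := trilin_opp _ hB.
have hm : norming (fun u v w => - B u v w) m m c.
  by split=> //; rewrite /m (BZ1 _ hB) (BZ2 _ hB) Bm -s2E; field.
have f1 w : B p p w = ip w c := F1c _ hB hp w.
have f2 w : - B m m w = ip w c := F1c _ hB' hm w.
have g1 w := F2sum _ hB (norm23 _ hB hp) w.
have g2 w := F2sum _ hB' (norm23 _ hB' hm) w.
have key w : ip w c = ip c p * ip w p + ip c m * ip w m.
  have e : (ip p c + ip c p) * ip w p + (ip m c + ip c m) * ip w m = ip w c + ip w c.
    by rewrite -g1 -g2 /= f1 f2; ring.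
  rewrite (ipC p c) (ipC m c) !cjid in e.
  apply: (@mulfI _ 2); first by rewrite pnatr_eq0.
  rewrite mulrDr (_ : 2 * ip w c = ip w c + ip w c) ?mulr2n; last by ring.
  by rewrite -e; ring.
pose d := c - ip c p *: p - ip c m *: m.
have d0 : d = 0.
  apply: ip_eq0; rewrite {2}/d !ipBr (ipZr (ip c p)) (ipZr (ip c m)) !cjid (key d); ring.
exists (ip c p / s1 + ip c m / s2), (ip c p / s1 - ip c m / s2).
have ce : c = ip c p *: p + ip c m *: m.
  by apply/eqP; rewrite addrC -subr_eq -subr_eq0 -/d d0.
rewrite {1}ce /p /m !scalerA scalerDr scalerBr scalerDl scalerBl addrACA.
by [].
Qed.

Section Forms.
Variable k : nat.
Implicit Types (T : ('I_k -> V) -> K).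

Lemma upd_same (w : 'I_k -> V) i : upd w i (w i) = w.
Proof. by apply: functional_extensionality => q; rewrite /upd; case: eqP => // ->. Qed.

Lemma ml_hom T : multilinear T -> forall w i s u, T (upd w i (s *: u)) = s * T (upd w i u).
Proof.
move=> hT w i s u.
have h0 : T (upd w i 0) = 0.
  have := hT w i 1 0 0; rewrite scale1r addr0 mul1r => h.
  have h' : T (upd w i 0) + 0 = T (upd w i 0) + T (upd w i 0) by rewrite addr0 {1}h.
  by rewrite -(addrI _ h').
by have := hT w i s u 0; rewrite addr0 h0 addr0.
Qed.

Lemma ml_zero T : multilinear T ->
  (forall w, (forall q, ip (w q) (w q) <= 1) -> T w = 0) -> forall w, T w = 0.
Proof.
move=> hT hb.
suff H : forall n w, (forall q : 'I_k, (n <= q)%N -> ip (w q) (w q) <= 1) -> T w = 0.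
  by move=> w; apply: (H k) => q; rewrite leqNgt ltn_ord.
elim=> [|n IH] w hw; first by apply: hb => q; apply: hw.
have [nk|kn] := ltnP n k; last first.
  by apply: IH => q; rewrite leqNgt (leq_trans (ltn_ord q) kn).
pose q0 := Ordinal nk.
have g0 u : ip u u <= 1 -> T (upd w q0 u) = 0.
  move=> hu; apply: IH => q nq; rewrite /upd; case: eqP => // /eqP qq.
  apply: hw; rewrite ltn_neqAle nq andbT; apply: contra qq => /eqP e.
  by apply/eqP/val_inj; rewrite /= e.
have := @hom_bound (fun u => T (upd w q0 u)) 0 (ml_hom _ hT w q0) _ (w q0).
rewrite mul0r upd_same => h; apply: sq_le0_eq0; apply: h.
by move=> u hu; rewrite g0 // normr0 expr0n.
Qed.

Lemma reduce T x (i j l : 'I_k) : i != j -> i != l -> j != l ->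
  multilinear T -> Defs.symmetric_form T -> attains_norm_at ip T x ->
  (forall q, ip (x q) (x q) = 1) ->
  exists B, trilin B /\ norming B (x i) (x j) (x l).
Proof.
move=> ij il jl hT hS [[w0 Tw0] hA] Nx.
have ji : j != i by rewrite eq_sym. have li : l != i by rewrite eq_sym.
have lj : l != j by rewrite eq_sym.
have Tx0 : T x != 0.
  apply/negP => /eqP Tx; move/negP: Tw0; apply; apply/eqP.
  apply: (ml_zero _ hT) => w hw; apply/eqP; rewrite -normr_le0.
  by have := hA w hw; rewrite Tx normr0.
pose W u v w := fun q => if q == i then u else if q == j then v else if q == l then w else x q.
have Wi u v w u' : upd (W u v w) i u' = W u' v w.
  by apply: functional_extensionality => q; rewrite /upd /W; case: (q == i).
have Wj u v w v' : upd (W u v w) j v' = W u v' w.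
  apply: functional_extensionality => q; rewrite /upd /W.
  have [->|qj] := eqVneq q j; first by rewrite (negbTE ji).
  by rewrite ?(negbTE qj).
have Wl u v w w' : upd (W u v w) l w' = W u v w'.
  apply: functional_extensionality => q; rewrite /upd /W.
  have [->|ql] := eqVneq q l; first by rewrite (negbTE li) (negbTE lj).
  by rewrite ?(negbTE ql).
have Wx : W (x i) (x j) (x l) = x.
  apply: functional_extensionality => q; rewrite /W.
  by case: eqP => [->|_] //; case: eqP => [->|_] //; case: eqP => [->|_].
have Wij u v w : (fun q => W u v w (tperm i j q)) = W v u w.
  apply: functional_extensionality => q; rewrite /W.
  case: tpermP => [->|->|qi qj].
  - by rewrite eqxx (negbTE ji) eqxx.
  - by rewrite eqxx (negbTE ji) eqxx.
  - by move/eqP/negbTE: qi => ->; move/eqP/negbTE: qj => ->.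
have Wjl u v w : (fun q => W u v w (tperm j l q)) = W u w v.
  apply: functional_extensionality => q; rewrite /W.
  case: tpermP => [->|->|qj ql].
  - by rewrite (negbTE li) (negbTE lj) eqxx (negbTE ji) eqxx.
  - by rewrite (negbTE li) (negbTE lj) eqxx (negbTE ji) eqxx.
  - by move/eqP/negbTE: qj => ->; move/eqP/negbTE: ql => ->.
pose B u v w := T (W u v w) / T x.
have Bs12 u v w : B u v w = B v u w.
  by rewrite /B -(hS (tperm i j) (W u v w)) Wij.
have Bs23 u v w : B u v w = B u w v.
  by rewrite /B -(hS (tperm j l) (W u v w)) Wjl.
have BZ u v w s : B (s *: u) v w = s * B u v w.
  by rewrite /B -(Wi u v w) ml_hom // Wi mulrA.
have BZ' u v w s : B u (s *: v) w = s * B u v w.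
  by rewrite Bs12 BZ Bs12.
have BZ'' u v w s : B u v (s *: w) = s * B u v w.
  by rewrite Bs23 BZ' Bs23.
have b0 u v w : ip u u <= 1 -> ip v v <= 1 -> ip w w <= 1 -> `|B u v w| ^+ 2 <= 1.
  move=> hu hv hw; rewrite exprn_ile1 ?normr_ge0 //.
  rewrite /B normrM normfV ler_pdivrMr ?normr_gt0 // mul1r.
  apply: hA => q; rewrite /in_unit_ball /W.
  case: eqP => // _; case: eqP => // _; case: eqP => // _.
  by rewrite Nx.
have b1 u v w : ip v v <= 1 -> ip w w <= 1 -> `|B u v w| ^+ 2 <= ip u u.
  move=> hv hw; rewrite -[ip u u]mul1r.
  by apply: (@hom_bound (fun u => B u v w)) => [s u'|u' hu]; [exact: BZ | exact: b0].
have b2 u v w : ip w w <= 1 -> `|B u v w| ^+ 2 <= ip u u * ip v v.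
  move=> hw.
  by apply: (@hom_bound (fun v => B u v w)) => [s v'|v' hv]; [exact: BZ' | exact: b1].
exists B; split; last first.
  by split; rewrite ?Nx // /B Wx mulfV.
split=> //.
- move=> a u u' v w; rewrite /B -(Wi u v w) hT !Wi mulrDl mulrA //.
- move=> u v w.
  by apply: (@hom_bound (fun w => B u v w)) => [s w'|w' hw]; [exact: BZ'' | exact: b2].
Qed.

End Forms.

Lemma bessel e u : ip e e = 1 -> `|ip u e| ^+ 2 <= ip u u.
Proof.
move=> Ne; have := ip_ge0 (u - ip u e *: e).
rewrite ipBl !ipBr !ipZl !ipZr Ne (ipC e u) -cjN; set l := ip u e.
by rewrite mulr1 subrr subr0 subr_ge0 mulrC.
Qed.

Section Spans.
Variable k : nat.

Lemma sum_ind (x : 'I_k -> V) (i0 : 'I_k) :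
  \sum_(q < k) (if q == i0 then 1 else 0) *: x q = x i0.
Proof.
rewrite (bigD1 i0) //= eqxx scale1r big1 ?addr0 // => q /negbTE ->.
by rewrite scale0r.
Qed.

Lemma span_from1 (x : 'I_k -> V) (a : V) (i0 : 'I_k) :
  a = x i0 -> a != 0 -> (forall q, exists al, x q = al *: a) -> span_dim x 1.
Proof.
move=> ax an0 hx; exists (fun _ => a); split.
- move=> c; rewrite big_ord1 => /eqP; rewrite scaler_eq0 (negbTE an0) orbF.
  by move=> /eqP c0 j; rewrite ord1.
- move=> _; exists (fun q => if q == i0 then 1 else 0); by rewrite sum_ind.
- move=> q; have [al e] := hx q; exists (fun _ => al); by rewrite big_ord1.
Qed.

Lemma sum2 (F : 'I_2 -> V) : \sum_(q < 2) F q = F ord0 + F (lift ord0 ord0).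
Proof. by rewrite !big_ord_recl big_ord0 addr0. Qed.

Lemma span_from2 (x : 'I_k -> V) (a b : V) (i0 j0 : 'I_k) :
  a = x i0 -> b = x j0 -> a != 0 -> (forall al, b != al *: a) ->
  (forall q, exists al be, x q = al *: a + be *: b) -> span_dim x 2.
Proof.
move=> ax bx an0 bn hx.
exists (fun q : 'I_2 => if q == ord0 then a else b); split.
- move=> c; rewrite sum2 /= => h.
  have c1 : c (lift ord0 ord0) = 0.
    apply/eqP; apply: contraT => nz.
    have hb : b = (- (c ord0 / c (lift ord0 ord0))) *: a.
      apply: (scalerI nz); rewrite scalerA mulrN mulrCA mulfV // mulr1 scaleNr.
      by apply/eqP; rewrite -addr_eq0 addrC h.
    by move: (bn (- (c ord0 / c (lift ord0 ord0)))); rewrite -hb eqxx.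
  have c0 : c ord0 = 0.
    by move: h; rewrite c1 scale0r addr0 => /eqP; rewrite scaler_eq0 (negbTE an0) orbF => /eqP.
  case=> [[|[|n]] Hj]; last by [].
  + by rewrite (_ : Ordinal Hj = ord0) //; apply: val_inj.
  + by rewrite (_ : Ordinal Hj = lift ord0 ord0) //; apply: val_inj.
- move=> q; case: (q == ord0).
  + by exists (fun q => if q == i0 then 1 else 0); rewrite sum_ind.
  + by exists (fun q => if q == j0 then 1 else 0); rewrite sum_ind.
- move=> q; have [al [be e]] := hx q.
  exists (fun q : 'I_2 => if q == ord0 then al else be); by rewrite sum2.
Qed.

Lemma prod_upd (F : V -> K) (w : 'I_k -> V) (i : 'I_k) (z : V) :
  \prod_q F (upd w i z q) = F z * \prod_(q | q != i) F (w q).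
Proof.
rewrite (bigD1 i) //= /upd eqxx; congr (_ * _).
by apply: eq_bigr => q /negbTE ->.
Qed.

Lemma back1 (x : 'I_k -> V) : (forall q, ip (x q) (x q) = 1) -> span_dim x 1 ->
  exists T, [/\ multilinear T, Defs.symmetric_form T, continuous_form ip T
              & attains_norm_at ip T x].
Proof.
move=> Nx [y [yi _ xs]].
pose y0 := y ord0.
have y0n : y0 != 0.
  apply/eqP => y00; have := yi (fun _ => 1); rewrite big_ord1 -/y0 y00 scaler0.
  by move=> /(_ erefl ord0) /eqP; rewrite oner_eq0.
have Ny : 0 <= ip y0 y0 := ip_ge0 y0.
have [s [s0 sE]] := sqrtK _ Ny.
have sn0 : s != 0 by apply: contra y0n => /eqP e; apply/eqP/ip_eq0; rewrite -sE e expr0n.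
pose e := s^-1 *: y0.
have Ne : ip e e = 1 by rewrite /e ipZl ipZr (cjR _ (_ : 0 <= s^-1)) ?invr_ge0 // -sE; field.
pose la q := ip (x q) e.
have xe q : x q = la q *: e.
  have [c xc] := xs q; rewrite big_ord1 -/y0 in xc.
  rewrite /la xc /e ipZl ipZr (cjR _ (_ : 0 <= s^-1)) ?invr_ge0 // scalerA -sE.
  apply/eqP; rewrite -subr_eq0 -scalerBl scaler_eq0 (negbTE y0n) orbF subr_eq0.
  by apply/eqP; field.
have la1 q : la q * cj (la q) = 1.
  by rewrite -(Nx q) (xe q) ipZl ipZr Ne mulr1.
pose z := \prod_q cj (la q).
exists (fun w => z * \prod_q ip (w q) e).
have Tb w : (forall q, ip (w q) (w q) <= 1) -> `|z * \prod_q ip (w q) e| <= 1.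
  move=> hw; rewrite normrM normr_prod (eq_bigr (fun _ => 1)); last first.
    move=> q _; rewrite cj_norm; apply/eqP; rewrite -sqrp_eq1 ?normr_ge0 //.
    by rewrite -cjN la1.
  rewrite big1_eq mul1r normr_prod; apply: prodr_ile1 => q _.
  rewrite normr_ge0 /= -(expr_le1 (_ : (0 < 2)%N)) ?normr_ge0 //.
  exact: le_trans (bessel e (w q) Ne) (hw q).
have Tx : z * \prod_q ip (x q) e = 1.
  by rewrite /z -big_split /= big1 // => q _; rewrite mulrC la1.
split.
- move=> w i a u v; rewrite !(prod_upd (fun t => ip t e)) ipDZ; ring.
- move=> s' w; congr (_ * _).
  by rewrite [RHS](reindex_inj (@perm_inj _ s')).
- by exists 1 => w hw; apply: Tb.
- split; first by exists x; rewrite Tx oner_eq0.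
  by move=> w hw; rewrite Tx normr1; apply: Tb.
Qed.

End Spans.

End Generic.

Arguments back1 {K cj V} hcj {ip} hip {k x}.
Arguments span_from1 {K V k x a i0}.
Arguments span_from2 {K V k x a b i0 j0}.
Arguments reduce {K cj V} hcj {ip} hip {k T x i j l}.
Arguments real_core {K cj V} hcj {ip} hip cjid {B} hB {a b c}.
Arguments complex_core {K cj V} hcj {ip} hip {B} hB {j} j2 cjj {a b c}.

Section Inst.
Variable R : realType.

Lemma cjok_R : cj_ok (fun r : R => r).
Proof.
split=> //; first by move=> x; rewrite -expr2 real_normK ?num_real.
split=> // r r0; exists (Num.sqrt r); split; [exact: sqrtr_ge0 | exact: sqr_sqrtr].
Qed.

Lemma cjok_C : cj_ok (@Num.conj R[i]).
Proof.
split.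
- by move=> x y; rewrite rmorphD.
- by move=> x y; rewrite rmorphM.
- exact: conjCK.
- by move=> x; rewrite normCK.
- split; first by move=> x; apply: geC0_conj.
  by move=> r r0; exists (sqrtC r); rewrite sqrtC_ge0 sqrtCK.
Qed.

End Inst.

Local Open Scope complex_scope.
Lemma prod_updG (K : numFieldType) (V : lmodType K) (S : comNzRingType) (k : nat)
  (F : V -> S) (w : 'I_k -> V) (i : 'I_k) (z : V) :
  \prod_q F (upd w i z q) = F z * \prod_(q | q != i) F (w q).
Proof.
rewrite (bigD1 i) //= /upd eqxx; congr (_ * _).
by apply: eq_bigr => q /negbTE ->.
Qed.

Lemma ReD (R : realType) (x y : R[i]) : complex.Re (x + y) = complex.Re x + complex.Re y.
Proof. by case: x => ? ?; case: y => ? ?. Qed.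
Lemma ReM (R : realType) (a : R) (x : R[i]) : complex.Re (a%:C * x) = a * complex.Re x.
Proof. by case: x => p q /=; rewrite mul0r subr0. Qed.

Section Back2.
Variables (R : realType) (V : lmodType R) (ip : V -> V -> R).
Hypothesis hip : is_inner_product (fun r : R => r) ip.
Let hcjR := cjok_R R.
Let iDZ := @ipDZ _ _ _ _ hip.
Let iDl := @ipDl _ _ _ _ hip.
Let iDr := @ipDr _ _ _ hcjR _ hip.
Let iZl := @ipZl _ _ _ _ hip.
Let iZr := @ipZr _ _ _ hcjR _ hip.
Let iBl := @ipBl _ _ _ _ hip.
Let iBr := @ipBr _ _ _ hcjR _ hip.
Let iC := @ipC _ _ _ _ hip.
Let i_ge0 := @ip_ge0 _ _ _ _ hip.
Let i_eq0 := @ip_eq0 _ _ _ _ hip.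

Lemma back2 k (x : 'I_k -> V) : (forall q, ip (x q) (x q) = 1) -> span_dim x 2 ->
  exists T, [/\ multilinear T, Defs.symmetric_form T, continuous_form ip T
              & attains_norm_at ip T x].
Proof.
move=> Nx [y [yi _ xs]].
pose y0 := y ord0; pose y1 := y (lift ord0 ord0).
have yi2 c0 c1 : c0 *: y0 + c1 *: y1 = 0 -> c0 = 0 /\ c1 = 0.
  move=> h; have := yi (fun j => if j == ord0 then c0 else c1).
  rewrite sum2 /= => /(_ h) H.
  by split; [exact: (H ord0) | exact: (H (lift ord0 ord0))].
have y0n : y0 != 0.
  apply/eqP => e; have [] := yi2 1 0; first by rewrite e scaler0 scale0r addr0.
  by move/eqP; rewrite oner_eq0.
pose s1 := Num.sqrt (ip y0 y0).
have s1E : s1 ^+ 2 = ip y0 y0 by rewrite sqr_sqrtr // i_ge0.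
have s1n0 : s1 != 0.
  by apply: contra y0n => /eqP e; apply/eqP/i_eq0; rewrite -s1E e expr0n.
pose e1 := s1^-1 *: y0.
have Ne1 : ip e1 e1 = 1 by rewrite /e1 iZl iZr -s1E /=; field.
have y0e : y0 = s1 *: e1 by rewrite /e1 scalerA mulfV // scale1r.
pose mu := ip y1 e1.
pose r := y1 - mu *: e1.
have rn : r != 0.
  apply/eqP => e; have [] := yi2 (mu / s1) (-1); last first.
    by move=> _ /eqP; rewrite oppr_eq0 oner_eq0.
  rewrite -(scalerA mu (s1^-1) y0) -/e1 scaleN1r.
  by apply/eqP; rewrite subr_eq0 eq_sym -subr_eq0; apply/eqP; exact: e.
pose s2 := Num.sqrt (ip r r).
have s2E : s2 ^+ 2 = ip r r by rewrite sqr_sqrtr // i_ge0.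
have s2n0 : s2 != 0.
  by apply: contra rn => /eqP e; apply/eqP/i_eq0; rewrite -s2E e expr0n.
pose e2 := s2^-1 *: r.
have Ne2 : ip e2 e2 = 1 by rewrite /e2 iZl iZr -s2E /=; field.
have e21 : ip e2 e1 = 0 by rewrite /e2 iZl /r iBl iZl Ne1 -/mu mulr1 subrr mulr0.
have e12 : ip e1 e2 = 0 by rewrite iC e21.
have y1e : y1 = s2 *: e2 + mu *: e1.
  by rewrite /e2 scalerA mulfV // scale1r /r subrK.
clearbody e2 e1.
pose a1 u := ip u e1. pose a2 u := ip u e2.
have dec q : x q = a1 (x q) *: e1 + a2 (x q) *: e2.
  have [c xc] := xs q; rewrite sum2 -/y0 -/y1 in xc.
  have -> : x q = (c ord0 * s1 + c (lift ord0 ord0) * mu) *: e1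
                  + (c (lift ord0 ord0) * s2) *: e2.
    rewrite xc y0e y1e scalerDr !scalerA scalerDl.
    by rewrite [RHS]addrAC addrA.
  rewrite /a1 /a2 !iDl !iZl Ne1 Ne2 e12 e21 /=.
  by rewrite !mulr0 !mulr1 addr0 add0r.
have a12 q : a1 (x q) ^+ 2 + a2 (x q) ^+ 2 = 1.
  rewrite -(Nx q) {3 4}(dec q) !iDl !iDr !iZl !iZr /= Ne1 Ne2 e12 e21.
  rewrite -/(a1 (x q)) -/(a2 (x q)); ring.
have bes u : a1 u ^+ 2 + a2 u ^+ 2 <= ip u u.
  have := i_ge0 (u - a1 u *: e1 - a2 u *: e2).
  rewrite !iBl !iBr !iZl !iZr /= Ne1 Ne2 e12 e21 (iC e1 u) (iC e2 u) /=.
  rewrite -/(a1 u) -/(a2 u) => h.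
  by nra.
pose zc u : R[i] := (a1 u) +i* (a2 u).
have zcl a u v : zc (a *: u + v) = a%:C * zc u + zc v.
  by rewrite /zc /a1 /a2 !iDZ; simpc.
have Rezc u : complex.Re (zc u) = a1 u by [].
have Imzc u : complex.Im (zc u) = a2 u by [].
have nzc u : `|zc u| ^+ 2 = (a1 u ^+ 2 + a2 u ^+ 2)%:C.
  by rewrite -add_Re2_Im2.
have zx1 q : `|zc (x q)| = 1.
  apply/eqP; rewrite -sqrp_eq1 ?normr_ge0 // nzc a12.
  by [].
have zxc q : Num.conj (zc (x q)) * zc (x q) = 1.
  by rewrite mulrC -normCK zx1 expr1n.
pose zeta := \prod_q Num.conj (zc (x q)).
pose T (w : 'I_k -> V) := complex.Re (zeta * \prod_q zc (w q)).
have Tx : T x = 1.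
  by rewrite /T /zeta -big_split /= big1.
have Tb w : (forall q, ip (w q) (w q) <= 1) -> `|T w| <= 1.
  move=> hw.
  have hP : `|zeta * \prod_q zc (w q)| <= 1.
    rewrite normrM normr_prod (eq_bigr (fun _ => 1)); last first.
      by move=> q _; rewrite norm_conjC zx1.
    rewrite big1_eq mul1r normr_prod; apply: prodr_ile1 => q _.
    rewrite normr_ge0 /= -(expr_le1 (_ : (0 < 2)%N)) ?normr_ge0 // nzc.
    rewrite lecR; exact: le_trans (bes (w q)) (hw q).
  have := add_Re2_Im2 (zeta * \prod_q zc (w q)).
  have h2 : `|zeta * \prod_q zc (w q)| ^+ 2 <= 1 by rewrite exprn_ile1 ?normr_ge0.
  move=> e; rewrite -e -[1]/(1%:C) lecR in h2.
  rewrite /T -(expr_le1 (_ : (0 < 2)%N)) ?normr_ge0 // real_normK ?num_real //.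
  apply: le_trans h2; rewrite lerDl; exact: sqr_ge0.
exists T; split.
- move=> w i a u v; rewrite /T !(@prod_updG _ _ _ _ zc) zcl.
  rewrite (_ : zeta * ((a%:C * zc u + zc v) * \prod_(q | q != i) zc (w q))
    = a%:C * (zeta * (zc u * \prod_(q | q != i) zc (w q)))
      + zeta * (zc v * \prod_(q | q != i) zc (w q))); last by ring.
  by rewrite ReD ReM.
- move=> s w; rewrite /T; congr (complex.Re (_ * _)).
  by rewrite [RHS](reindex_inj (@perm_inj _ s)).
- by exists 1 => w hw; apply: Tb.
- split; first by exists x; rewrite Tx oner_eq0.
  by move=> w hw; rewrite Tx normr1; apply: Tb.
Qed.
End Back2.

Lemma pick3 k (hk : (3 <= k)%N) (p q : 'I_k) : exists l : 'I_k, l != p /\ l != q.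
Proof.
have h0 : (0 < k)%N by lia.
have h1 : (1 < k)%N by lia.
have h2 : (2 < k)%N by lia.
case/boolP: ((Ordinal h0 != p) && (Ordinal h0 != q)) => [/andP[]|H0]; first by exists (Ordinal h0).
case/boolP: ((Ordinal h1 != p) && (Ordinal h1 != q)) => [/andP[]|H1]; first by exists (Ordinal h1).
exists (Ordinal h2); move: H0 H1; rewrite -!val_eqE /=.
case: p q => [p hp] [q hq] /=.
move=> H0 H1; split; lia.
Qed.

Theorem theorem1p1 (R : realType) (k : nat) (hk : (3 <= k)%N) :
  (forall V : lmodType R,
     norm_attainment_char (fun r : R => r) V k (fun d => d = 1%N \/ d = 2%N))
  /\
  (forall V : lmodType R[i],
     norm_attainment_char (@Num.conj R[i]) V k (fun d => d = 1%N)).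
Proof.
have k0 : (0 < k)%N by lia.
pose i0 := Ordinal k0.
split.
- move=> V ip [hip _] x Nx; split.
  + move=> [T [hT hS hC hA]].
    have an0 : x i0 != 0.
      apply/eqP => e; move: (Nx i0); rewrite e (@ip0l _ _ _ _ hip) => /eqP.
      by rewrite eq_sym oner_eq0.
    case: (classic (forall q, exists al, x q = al *: x i0)) => H.
      by exists 1%N; split; [left | exact: (span_from1 erefl an0 H)].
    have [j0 Hj0] : exists j0, forall al, x j0 != al *: x i0.
      apply: NNPP => nex; apply: H => q; apply: NNPP => nq; apply: nex.
      by exists q => al; apply/eqP => e; apply: nq; exists al.
    have ij : i0 != j0 by apply/eqP => e; move: (Hj0 1); rewrite scale1r -e eqxx.
    exists 2%N; split; first by right.
    apply: (span_from2 erefl erefl an0 Hj0) => q.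
    have [->|qi] := eqVneq q i0; first by exists 1, 0; rewrite scale1r scale0r addr0.
    have [->|qj] := eqVneq q j0; first by exists 0, 1; rewrite scale1r scale0r add0r.
    have i0q : i0 != q by rewrite eq_sym.
    have j0q : j0 != q by rewrite eq_sym.
    have [B [hB hn]] := reduce (cjok_R R) hip (i:=i0) (j:=j0) (l:=q) ij
      i0q j0q hT hS hA Nx.
    apply: (real_core (cjok_R R) hip (fun _ => erefl) hB hn).
    * apply/eqP => e; have := (@ip_eq0 _ _ _ _ hip _ e) => /eqP.
      rewrite addrC addr_eq0 => /eqP e'; move: (Hj0 (-1)).
      by rewrite scaleN1r e' eqxx.
    * apply/eqP => e; have := (@ip_eq0 _ _ _ _ hip _ e) => /eqP.
      rewrite subr_eq0 => /eqP e'; move: (Hj0 1).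
      by rewrite scale1r e' eqxx.
  + move=> [d [[->|->] hd]].
    * exact: (back1 (cjok_R R) hip Nx hd).
    * exact: (@back2 _ _ _ hip _ _ Nx hd).
- move=> V ip [hip _] x Nx; split.
  + move=> [T [hT hS hC hA]]; exists 1%N; split => //.
    have an0 : x i0 != 0.
      apply/eqP => e; move: (Nx i0); rewrite e (@ip0l _ _ _ _ hip) => /eqP.
      by rewrite eq_sym oner_eq0.
    apply: (span_from1 erefl an0) => q.
    have [->|qi] := eqVneq q i0; first by exists 1; rewrite scale1r.
    have [l [lq li]] := pick3 _ hk q i0.
    have ql : q != l by rewrite eq_sym.
    have [B [hB hn]] := reduce (cjok_C R) hip (i:=q) (j:=l) (l:=i0)
      ql qi li hT hS hA Nx.
    exists (ip (x q) (x i0)).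
    exact: (complex_core (cjok_C R) hip hB (sqrCi _) (conjCi _) hn).
  + move=> [d [-> hd]].
    exact: (back1 (cjok_C R) hip Nx hd).
Qed.
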